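(* Let $k$ be a field and $A$ a graded $k$-subalgebra of the polynomial ring $B=k[X_1,\dots,X_n]$ with standard grading. Suppose there is a retraction $\pi:B\to A$ with $\pi(B_+)\subseteq B_+$. Then there exist an invertible matrix $\sigma\in GL_n(k)$ (acting by linear change of variables $X_i\mapsto\sigma(X_i)=\sum_j\sigma_{ij}X_j$) and an integer $d\le n$ such that $A=k[\sigma(X_1),\dots,\sigma(X_d)]$. In particular $A$ is a polynomial ring over $k$.
   Context: The standard grading has $B_i$ the homogeneous polynomials of degree $i$; $B_+=\bigoplus_{i\ge1}B_i$. $A$ graded means $A=\bigoplus_i(A\cap B_i)$. A retraction $\pi:B\to A$ is a ring homomorphism onto $A$ restricting to the identity on $A$. *)

(* Defs.v *)
From HB Require Import structures.
From mathcomp Require Import all_boot all_order all_algebra.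
Set Implicit Arguments. Unset Strict Implicit. Unset Printing Implicit Defensive.
Import GRing.Theory.
Local Open Scope ring_scope.

(* Multivariate polynomial ring k[X_0,...,X_{n-1}], built as iterated
   univariate polynomials: mpolyR k 0 = k, mpolyR k (n+1) = (mpolyR k n)[X_n].
   Variables are indexed 0..n-1 (paper: X_1..X_n). *)
Fixpoint mpolyR (k : comNzRingType) (n : nat) : comNzRingType :=
  match n with 0 => k | n'.+1 => {poly mpolyR k n'} : comNzRingType end.

Fixpoint mcst (k : comNzRingType) (n : nat) : k -> mpolyR k n :=
  match n with 0 => fun c => c | n'.+1 => fun c => (mcst n' c)%:P end.

(* the variable X_i (0 if i >= n) *)
Fixpoint mX (k : comNzRingType) (n : nat) (i : nat) : mpolyR k n :=
  match n with
  | 0 => 0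
  | n'.+1 => if (i < n')%N then (mX k n' i)%:P else if (i == n')%N then 'X else 0
  end.

(* homogeneous component of (total) degree d, standard grading *)
Fixpoint hcomp (k : comNzRingType) (n : nat) (d : nat) : mpolyR k n -> mpolyR k n :=
  match n with
  | 0 => fun c => if (d == 0)%N then c else 0
  | n'.+1 => fun p =>
      \poly_(j < size p) (if (j <= d)%N then hcomp (d - j)%N p`_j else 0)
  end.

Fixpoint meval (k : comNzRingType) (n m : nat) (ys : nat -> mpolyR k m)
  : mpolyR k n -> mpolyR k m :=
  match n with
  | 0 => fun c => mcst m c
  | n'.+1 => fun p => \sum_(j < size p) meval ys p`_j * ys n' ^+ j
  end.

Definition sigmaX (k : comNzRingType) (n : nat) (s : 'M[k]_n) (i : nat)
  : mpolyR k n :=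
  match (insub i : option 'I_n) with
  | Some i' => \sum_(j < n) mcst n (s i' j) * mX k n j
  | None => 0
  end.

(* Main.v *)
Require Import Defs.
From HB Require Import structures.
From mathcomp Require Import all_boot all_order all_algebra zify.
From Stdlib Require Import Classical.
Set Implicit Arguments. Unset Strict Implicit. Unset Printing Implicit Defensive.
Import GRing.Theory.
Local Open Scope ring_scope.

Definition ev (R S : comNzRingType) (f : R -> S) (y : S) (p : {poly R}) : S :=
  \sum_(j < size p) f p`_j * y ^+ j.

Section Ev.
Variables (R S : comNzRingType) (f : R -> S).
Hypotheses (f0 : f 0 = 0) (fD : {morph f : a b / a + b})
  (fM : {morph f : a b / a * b}) (f1 : f 1 = 1).

Lemma ev_horner y p : ev f y p = (map_poly f p).[y].
Proof.
rewrite /ev (@horner_coef_wide _ (size p)); last exact: size_poly.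
by apply: eq_bigr => j _; rewrite coef_map_id0.
Qed.

Let F : {rmorphism R -> S} :=
  HB.pack f (GRing.isNmodMorphism.Build _ _ f (f0, fD))
            (GRing.isMonoidMorphism.Build _ _ f (f1, fM)).

Lemma evD y : {morph ev f y : a b / a + b}.
Proof. by move=> a b; rewrite !ev_horner -[f]/(F : R -> S) rmorphD hornerD. Qed.
Lemma evM y : {morph ev f y : a b / a * b}.
Proof. by move=> a b; rewrite !ev_horner -[f]/(F : R -> S) rmorphM hornerM. Qed.
Lemma ev1 y : ev f y 1 = 1.
Proof. by rewrite !ev_horner -[f]/(F : R -> S) rmorph1 hornerC. Qed.
Lemma ev0 y : ev f y 0 = 0.
Proof. by rewrite /ev size_poly0 big_ord0. Qed.
Lemma evC y c : ev f y c%:P = f c.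
Proof. by rewrite ev_horner -[f]/(F : R -> S) map_polyC hornerC. Qed.
Lemma evX y : ev f y 'X = y.
Proof. by rewrite ev_horner -[f]/(F : R -> S) map_polyX hornerX. Qed.
End Ev.

Section M.
Variable k : comNzRingType.

Lemma mcst_morph n : [/\ mcst n (0 : k) = 0, {morph @mcst k n : a b / a + b},
   {morph @mcst k n : a b / a * b} & mcst n (1 : k) = 1].
Proof.
elim: n => [|n [h0 hD hM h1]] //=.
split; first by rewrite h0.
- by move=> a b; rewrite hD polyCD.
- by move=> a b; rewrite hM polyCM.
- by rewrite h1.
Qed.

Lemma meval_morph m (ys : nat -> mpolyR k m) n :
  [/\ meval ys (0 : mpolyR k n) = 0, {morph @meval k n m ys : a b / a + b},
   {morph @meval k n m ys : a b / a * b} & meval ys (1 : mpolyR k n) = 1].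
Proof.
elim: n => [|n [h0 hD hM h1]].
  by have [? ? ? ?] := mcst_morph m.
rewrite /=; split.
- exact: ev0.
- exact: evD.
- exact: evM.
- exact: ev1.
Qed.

Lemma meval_mcst m (ys : nat -> mpolyR k m) n c : meval ys (mcst n c) = mcst m c.
Proof.
elim: n => [|n IH] //=.
have [h0 hD hM h1] := meval_morph ys n.
by rewrite -[\sum_(_ < _) _]/(ev _ _ _) (evC h0 hD hM h1).
Qed.

Lemma meval_mX m (ys : nat -> mpolyR k m) n i : (i < n)%N -> meval ys (mX k n i) = ys i.
Proof.
elim: n => [|n IH] //= lt.
have [h0 hD hM h1] := meval_morph ys n.
case: ifP => lin.
  rewrite -[\sum_(_ < _) _]/(ev _ _ _) (evC h0 hD hM h1); exact: IH.
have -> : i = n by apply/eqP; rewrite eqn_leq -ltnS lt leqNgt lin.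
by rewrite eqxx -[\sum_(_ < _) _]/(ev _ _ _) (evX h0 hD hM h1).
Qed.
End M.

Section H.
Variable k : comNzRingType.

Unset Implicit Arguments.
Fixpoint Hh (n : nat) : mpolyR k n -> {poly mpolyR k n} :=
  match n with 0 => fun c => c%:P
  | n'.+1 => fun p => @ev (mpolyR k n') {poly mpolyR k n'.+1}
        (fun c => map_poly polyC (Hh n' c)) ('X%:P * 'X) p end.
Set Implicit Arguments.
Arguments Hh {n}.

Lemma hcomp0 n e : @hcomp k n e 0 = 0.
Proof. by case: n => [|n] /=; [case: eqP | rewrite size_poly0 poly_def big_ord0]. Qed.

Lemma coef_hcomp n d (p : mpolyR k n.+1) j :
  (@hcomp k n.+1 d p)`_j = if (j <= d)%N then hcomp (d - j) p`_j else 0.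
Proof.
rewrite /= coef_poly; case: ltnP => // le; rewrite nth_default // hcomp0.
by case: ifP.
Qed.

Lemma hcompK n i e (b : mpolyR k n) :
  hcomp i (hcomp e b) = if i == e then hcomp e b else 0.
Proof.
elim: n i e b => [|n IH] i e b.
  by rewrite /=; case: (i =P 0) => [->|]; case: (e =P 0) => [->|] //= ?; case: eqP.
apply/polyP => j; rewrite coef_hcomp.
case: (i =P e) => [->|ne].
  by rewrite coef_hcomp; case: ifP => // je; rewrite je IH eqxx.
rewrite -[X in _ = X]/((0:{poly mpolyR k n})`_j) coef0; case: ifP => // ji; rewrite coef_hcomp; case: ifP => je;
  last by rewrite hcomp0.
rewrite IH; case: eqP => // h; exfalso; apply: ne.
move: h ji je; lia.
Qed.

Lemma H_morph n : [/\ Hh (0 : mpolyR k n) = 0, {morph @Hh n : a b / a + b},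
   {morph @Hh n : a b / a * b} & Hh (1 : mpolyR k n) = 1].
Proof.
elim: n => [|n [h0 hD hM h1]].
  by split => //= [a b|a b]; rewrite ?polyCD ?polyCM.
have f0 : map_poly polyC (Hh (0 : mpolyR k n)) = 0 :> {poly mpolyR k n.+1}.
  by rewrite h0 rmorph0.
have fD : {morph (fun c => map_poly polyC (Hh c) : {poly mpolyR k n.+1}) : a b / a + b}.
  by move=> a b /=; rewrite hD rmorphD.
have fM : {morph (fun c => map_poly polyC (Hh c) : {poly mpolyR k n.+1}) : a b / a * b}.
  by move=> a b /=; rewrite hM rmorphM.
have f1 : map_poly polyC (Hh (1 : mpolyR k n)) = 1 :> {poly mpolyR k n.+1}.
  by rewrite h1 rmorph1.
split; [exact: ev0 | exact: evD | exact: evM | exact: ev1].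
Qed.
End H.
Arguments Hh {k n}.

Section H2.
Variable k : comNzRingType.

Lemma coef_H n (b : mpolyR k n) e : (Hh b)`_e = hcomp e b.
Proof.
elim: n b e => [|n IH] b e; first by rewrite /= coefC.
rewrite /= /ev coef_sum poly_def; apply: eq_bigr => j _.
rewrite exprMn -rmorphXn mulrA coefMXn ltnNge.
case: (leqP j e) => je /=; last by rewrite scale0r.
by rewrite coefMC coef_map /= IH mul_polyC.
Qed.
End H2.

Section H3.
Variable k : comNzRingType.

Lemma H_one n (b : mpolyR k n) : (Hh b).[1] = b.
Proof.
elim: n b => [|n IH] b; first by rewrite /= hornerC.
rewrite /= /ev horner_sum -[RHS]coefK poly_def; apply: eq_bigr => j _.
rewrite hornerM horner_exp hornerMX hornerC mulr1.
by rewrite -[1 in LHS]polyC1 horner_map IH mul_polyC.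
Qed.

Lemma H_mcst n c : Hh (mcst n c : mpolyR k n) = (mcst n c)%:P.
Proof.
elim: n => [|n IH] //=.
have [h0 hD hM h1] := H_morph k n.
have f0 : map_poly polyC (Hh (0 : mpolyR k n)) = 0 :> {poly mpolyR k n.+1}.
  by rewrite h0 rmorph0.
have fD : {morph (fun c => map_poly polyC (Hh c) : {poly mpolyR k n.+1}) : a b / a + b}.
  by move=> a b /=; rewrite hD rmorphD.
have fM : {morph (fun c => map_poly polyC (Hh c) : {poly mpolyR k n.+1}) : a b / a * b}.
  by move=> a b /=; rewrite hM rmorphM.
have f1 : map_poly polyC (Hh (1 : mpolyR k n)) = 1 :> {poly mpolyR k n.+1}.
  by rewrite h1 rmorph1.
by rewrite (evC f0 fD fM f1) IH map_polyC.
Qed.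

Lemma H_mX n i : (i < n)%N -> Hh (mX k n i) = (mX k n i)%:P * 'X.
Proof.
elim: n => [|n IH] //= lt.
have [h0 hD hM h1] := H_morph k n.
have f0 : map_poly polyC (Hh (0 : mpolyR k n)) = 0 :> {poly mpolyR k n.+1}.
  by rewrite h0 rmorph0.
have fD : {morph (fun c => map_poly polyC (Hh c) : {poly mpolyR k n.+1}) : a b / a + b}.
  by move=> a b /=; rewrite hD rmorphD.
have fM : {morph (fun c => map_poly polyC (Hh c) : {poly mpolyR k n.+1}) : a b / a * b}.
  by move=> a b /=; rewrite hM rmorphM.
have f1 : map_poly polyC (Hh (1 : mpolyR k n)) = 1 :> {poly mpolyR k n.+1}.
  by rewrite h1 rmorph1.
case: ifP => lin.
  by rewrite (evC f0 fD fM f1) IH // rmorphM /= map_polyC map_polyX.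
have -> : i = n by apply/eqP; rewrite eqn_leq -ltnS lt leqNgt lin.
by rewrite eqxx (evX f0 fD fM f1).
Qed.
End H3.

Section P4.
Variable k : comNzRingType.

Lemma hcompD n e : {morph @hcomp k n e : a b / a + b}.
Proof.
move=> a b; have [h0 hD hM h1] := H_morph k n.
by rewrite -!coef_H hD coefD.
Qed.

Lemma hcompM n e (a b : mpolyR k n) :
  hcomp e (a * b) = \sum_(j < e.+1) hcomp j a * hcomp (e - j) b.
Proof.
have [h0 hD hM h1] := H_morph k n.
by rewrite -coef_H hM coefM; apply: eq_bigr => j _; rewrite !coef_H.
Qed.

Lemma hcomp_sum n e I (r : seq I) (P : pred I) (F : I -> mpolyR k n) :
  hcomp e (\sum_(i <- r | P i) F i) = \sum_(i <- r | P i) hcomp e (F i).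
Proof. by apply: big_morph; [exact: hcompD | exact: hcomp0]. Qed.

Lemma hcomp_mcst n e c : hcomp e (mcst n c : mpolyR k n) = if e == 0%N then mcst n c else 0.
Proof. by rewrite -coef_H H_mcst coefC. Qed.

Lemma hcomp_mX n e i : (i < n)%N ->
  hcomp e (mX k n i) = if e == 1%N then mX k n i else 0.
Proof.
move=> lt; rewrite -coef_H H_mX // coefMX coefC.
by case: e => [|[|e]].
Qed.

Lemma hcomp_decomp n (b : mpolyR k n) : b = \sum_(e < size (Hh b)) hcomp e b.
Proof.
rewrite -{1}(H_one b) horner_coef; apply: eq_bigr => e _.
by rewrite expr1n mulr1 coef_H.
Qed.

Lemma hcomp0_const n (b : mpolyR k n) : exists c, hcomp 0 b = mcst n c.
Proof.
elim: n b => [|n IH] b; first by exists b.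
have [c hc] := IH b`_0; exists c => /=.
apply/polyP => j; rewrite coef_hcomp coefC.
by case: j => [|j] //=; rewrite hc.
Qed.

Lemma hcomp1_lin n (b : mpolyR k n) : exists v : nat -> k,
  hcomp 1 b = \sum_(j < n) mcst n (v j) * mX k n j.
Proof.
elim: n b => [|n IH] b; first by exists (fun _ => 0); rewrite big_ord0.
have [v hv] := IH b`_0; have [c hc] := hcomp0_const b`_1.
exists (fun j => if (j < n)%N then v j else c).
have -> : hcomp 1 b = (hcomp 1 b`_0)%:P + (hcomp 0 b`_1)%:P * 'X.
  apply/polyP => j; rewrite coef_hcomp coefD coefMX !coefC.
  by case: j => [|[|j]] //=; rewrite ?addr0 ?add0r.
rewrite hv hc big_ord_recr /= ltnn eqxx rmorph_sum /=; congr (_ + _).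
apply: eq_bigr => j _; rewrite ltn_ord polyCM //.
Qed.

Lemma hcomp_ideal n (b : mpolyR k n) : hcomp 0 b = 0 ->
  exists c : nat -> mpolyR k n, b = \sum_(i < n) mX k n i * c i.
Proof.
elim: n b => [|n IH] b.
  by move=> /= h; exists (fun _ => 0); rewrite big_ord0.
move=> h.
have h0 : hcomp 0 b`_0 = 0.
  by move/(congr1 (fun q : {poly mpolyR k n} => q`_0)): h; rewrite coef_hcomp coef0.
have [c hc] := IH _ h0.
exists (fun i => if (i < n)%N then (c i)%:P else drop_poly 1 b).
rewrite big_ord_recr /= ltnn eqxx.
have -> : \sum_(i < n)
     (if (i < n)%N then (mX k n i)%:P else if (nat_of_ord i == n)%N then 'X else 0) *
     (if (i < n)%N then (c i)%:P else drop_poly 1 b) = (\sum_(i < n) mX k n i * c i)%:P.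
  by rewrite rmorph_sum; apply: eq_bigr => i _ /=; rewrite ltn_ord polyCM.
rewrite -hc -[LHS](poly_take_drop 1) expr1 mulrC; congr (_ + _).
by apply/polyP => j; rewrite coef_take_poly coefC; case: j.
Qed.
End P4.

Lemma max_ex (P : nat -> Prop) N : P 0%N -> (forall r, P r -> (r <= N)%N) ->
  exists r, P r /\ forall r', P r' -> (r' <= r)%N.
Proof.
move=> P0 bnd.
suff: forall t r, (N - r <= t)%N -> P r -> exists r, P r /\ forall r', P r' -> (r' <= r)%N.
  by move=> /(_ N 0%N); apply => //; rewrite subn0.
elim=> [|t IH] r le Pr.
  exists r; split => // r' Pr'; have := bnd _ Pr'; have := bnd _ Pr; lia.
case: (classic (exists r', P r' /\ (r < r')%N)) => [[r' [Pr' lt]]|no].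
  by apply: (IH r') => //; have := bnd _ Pr'; lia.
exists r; split => // r' Pr'; rewrite leqNgt; apply/negP => lt; apply: no; by exists r'.
Qed.

Lemma row_base_row (k : fieldType) m n (W : 'M[k]_(m,n)) (i : 'I_(\rank W)) :
  row i (row_base W) = row (widen_ord (rank_leq_col W) i) (row_ebase W).
Proof.
apply/rowP => j; rewrite !mxE /row_base (bigD1 (widen_ord (rank_leq_col W) i)) //=.
rewrite big1 ?addr0; first by rewrite mxE eqxx ltn_ord mul1r.
by move=> l /negP ne; rewrite mxE; case: eqP => [h|]; [case: ne; apply/eqP/val_inj | rewrite mul0r].
Qed.

Section Main.
Variables (k : fieldType) (n : nat) (A : mpolyR k n -> Prop).
Hypotheses (hAk : forall c : k, A (mcst n c))
  (hAD : forall a b, A a -> A b -> A (a + b))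
  (hAM : forall a b, A a -> A b -> A (a * b)).

Definition lin (v : 'rV[k]_n) : mpolyR k n := \sum_(j < n) mcst n (v 0 j) * mX k n j.

Lemma A0 : A 0.
Proof. by have [h0 _ _ _] := mcst_morph k n; rewrite -h0. Qed.

Lemma A_sum I (r : seq I) (P : pred I) F : (forall i, P i -> A (F i)) ->
  A (\sum_(i <- r | P i) F i).
Proof. by move=> h; apply: big_ind => //; exact: A0. Qed.

Lemma A_exp a j : A a -> A (a ^+ j).
Proof.
move=> h; elim: j => [|j IH]; last by rewrite exprS; apply: hAM.
by have [_ _ _ h1] := mcst_morph k n; rewrite expr0 -h1.
Qed.

Lemma lin_mul m (u : 'rV[k]_m) (W : 'M[k]_(m, n)) :
  lin (u *m W) = \sum_(i < m) mcst n (u 0 i) * lin (row i W).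
Proof.
have [h0 hD hM h1] := mcst_morph k n.
rewrite /lin; under eq_bigr => j _ do rewrite mxE (big_morph _ hD h0) mulr_suml.
rewrite exchange_big /=; apply: eq_bigr => i _; rewrite mulr_sumr.
by apply: eq_bigr => j _; rewrite mxE hM mulrA.
Qed.

Lemma A_comb m (W : 'M[k]_(m, n)) u : (forall i, A (lin (row i W))) -> A (lin (u *m W)).
Proof. by move=> h; rewrite lin_mul; apply: A_sum => i _; apply: hAM. Qed.

Lemma A_meval (ys : nat -> mpolyR k n) d : (forall i, (i < d)%N -> A (ys i)) ->
  forall q : mpolyR k d, A (meval ys q).
Proof.
elim: d => [|d IH] hy q; first exact: hAk.
rewrite /=; apply: A_sum => j _; apply: hAM.
  by apply: IH => i lt; apply: hy; apply: ltnW.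
by apply: A_exp; apply: hy.
Qed.
End Main.
Unset Implicit Arguments.

Theorem corollary5p15 (k : fieldType) (n : nat) (A : mpolyR k n -> Prop)
  (hAk : forall c : k, A (mcst n c))
  (hAD : forall a b, A a -> A b -> A (a + b))
  (hAM : forall a b, A a -> A b -> A (a * b))
  (hAgr : forall a (i : nat), A a -> A (hcomp i a))
  (pi : {rmorphism mpolyR k n -> mpolyR k n})
  (hpiA : forall b, A (pi b))
  (hpiid : forall a, A a -> pi a = a)
  (hpiplus : forall b, hcomp 0 b = 0 -> hcomp 0 (pi b) = 0) :
  exists (s : 'M[k]_n) (d : nat),
    s \in unitmx /\ (d <= n)%N /\
    (forall b, A b <-> exists q : mpolyR k d, b = meval (sigmaX s) q).
Proof.
pose U (v : 'rV[k]_n) := A (lin v).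
pose P r := exists m (W : 'M[k]_(m, n)), (forall i, U (row i W)) /\ \rank W = r.
have [r [[m [W [WU rW]]] rmax]] : exists r, P r /\ forall r', P r' -> (r' <= r)%N.
  apply: (@max_ex P n).
    by exists 0%N, 0; split => [[]//|]; rewrite mxrank0.
  by move=> r' [m' [W' [_ <-]]]; apply: rank_leq_col.
have Wmax : forall v, U v -> (v <= W)%MS.
  move=> v Uv; apply/negPn/negP => nv.
  have : P (\rank (col_mx W v)).
    exists (m + 1)%N, (col_mx W v); split => // i.
    case: (splitP i) => j hj; [have -> : i = lshift 1 j by apply: val_inj | have -> : i = rshift m j by apply: val_inj]; by rewrite ?rowKu ?rowKd ?row_id.
  have : (W < col_mx W v)%MS.
    rewrite ltmxE col_mx_sub negb_and nv orbT andbT; by rewrite -addsmxE addsmxSl.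
  rewrite ltmxErank => /andP[_ lt] /rmax; rewrite -rW leqNgt lt //.
set s := row_ebase W; set d := \rank W.
have sigE : forall i : 'I_d, sigmaX s i = lin (row i (row_base W)).
  move=> i; rewrite row_base_row /sigmaX /lin.
  case: insubP => [i' _ hi'|]; last by rewrite (leq_trans (ltn_ord i) (rank_leq_col W)).
  have -> : i' = widen_ord (rank_leq_col W) i by apply: val_inj.
  by apply: eq_bigr => j _; rewrite mxE.
have sigA : forall i, (i < d)%N -> A (sigmaX s i).
  move=> i lt; have := sigE (Ordinal lt); rewrite /= => ->.
  have : (row (Ordinal lt) (row_base W) <= W)%MS.
    by rewrite (submx_trans (row_sub _ _)) // eq_row_base.
  by case/submxP => u ->; apply: A_comb.
pose S b := exists q : mpolyR k d, b = meval (sigmaX s) q.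
have [m0 mD mM m1] := meval_morph (sigmaX s) d.
have SD : forall a b, S a -> S b -> S (a + b).
  by move=> a b [q1 ->] [q2 ->]; exists (q1 + q2); rewrite mD.
have SM : forall a b, S a -> S b -> S (a * b).
  by move=> a b [q1 ->] [q2 ->]; exists (q1 * q2); rewrite mM.
have Sc : forall c, S (mcst n c).
  by move=> c; exists (mcst d c); rewrite meval_mcst.
have S0 : S 0 by have [h0 _ _ _] := mcst_morph k n; rewrite -h0.
have Ssum : forall I (r0 : seq I) (Pr : pred I) F, (forall i, Pr i -> S (F i)) ->
    S (\sum_(i <- r0 | Pr i) F i).
  by move=> I r0 Pr F h; apply: big_ind.
have Slin : forall v, U v -> S (lin v).
  move=> v Uv; have := Wmax v Uv; rewrite -(eq_row_base W) => /submxP [w ->].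
  rewrite lin_mul; exists (\sum_(i < d) mcst d (w 0 i) * mX k d i).
  rewrite (big_morph _ mD m0); apply: eq_bigr => i _.
  by rewrite mM meval_mcst meval_mX // sigE.
exists s, d; split; first exact: row_ebase_unit.
split; first exact: rank_leq_col.
move=> b; split; last by move=> [q ->]; apply: A_meval.
move=> Ab.
have key : forall e a, A a -> S (hcomp e a).
  elim/ltn_ind => e IH a Aa.
  case: e IH => [|[|e]] IH.
  - by have [c ->] := hcomp0_const a; apply: Sc.
  - have [v hv] := hcomp1_lin a.
    have <- : lin (\row_j v j) = hcomp 1 a.
      by rewrite hv /lin; apply: eq_bigr => j _; rewrite mxE.
    apply: Slin; rewrite /U /lin.
    have -> : \sum_(j < n) mcst n ((\row_j v j) 0 j) * mX k n j = hcomp 1 a.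
      by rewrite hv; apply: eq_bigr => j _; rewrite mxE.
    exact: hAgr.
  - set h := hcomp e.+2 a.
    have Ah : A h by apply: hAgr.
    have hE : hcomp e.+2 h = h by rewrite /h hcompK eqxx.
    have h0 : hcomp 0 h = 0 by rewrite /h hcompK.
    have [c hc] := hcomp_ideal h0.
    have hc' : h = \sum_(i < n) mX k n i * hcomp e.+1 (c i).
      rewrite -{1}hE {1}hc hcomp_sum; apply: eq_bigr => i _.
      rewrite hcompM (bigD1 (inord 1%N)) //= big1 ?addr0.
        by rewrite (@inordK e.+2 1%N) // hcomp_mX // eqxx.
      move=> j ne; rewrite hcomp_mX //; case: eqP => [h1|]; last by rewrite mul0r.
      by case/eqP: ne; apply: val_inj; rewrite /= (@inordK e.+2 1%N).
    have hpi : h = \sum_(i < n) pi (mX k n i) * pi (hcomp e.+1 (c i)).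
      by rewrite -(hpiid _ Ah) {1}hc' rmorph_sum; apply: eq_bigr => i _; rewrite rmorphM.
    rewrite -/h -hE hpi hcomp_sum; apply: (Ssum) => i _; rewrite hcompM; apply: (Ssum) => j _.
    have hX0 : hcomp 0 (pi (mX k n i)) = 0 by apply: hpiplus; rewrite hcomp_mX.
    have hc0 : hcomp 0 (pi (hcomp e.+1 (c i))) = 0 by apply: hpiplus; rewrite hcompK.
    case: (posnP j) => [j0|jpos]; first by rewrite j0 hX0 mul0r.
    have := ltn_ord j; rewrite ltnS leq_eqVlt => /orP [/eqP je|jlt].
      by rewrite je subnn hc0 mulr0.
    apply: SM; apply: IH; rewrite ?hpiA //; lia.
rewrite (hcomp_decomp b); apply: (Ssum) => e _; exact: key.
Qed.
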